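(* Let $\mathcal{X} = \{x_1, \dots, x_N\}$ be a finite set and let $P_{\mathrm{coor}}$ be a symmetric joint probability distribution on $\mathcal{X} \times \mathcal{X}$ with marginal $P(x) = \sum_{x'} P_{\mathrm{coor}}(x, x')$, and assume $P_{\mathrm{coor}}(x_i,x_j) > 0$ for all $i,j$. Let $K \in \mathbb{R}^{N\times N}$ be the PMI matrix $K_{ij} = \log \frac{P_{\mathrm{coor}}(x_i, x_j)}{P(x_i)P(x_j)}$. Suppose there are $\rho_{\min} > 0$ and $\delta \ge 0$ with $[\log \rho_{\min}, \log \rho_{\min} + \delta] \subseteq (-\infty, 0]$ such that every off-diagonal entry satisfies $\log \rho_{\min} \le K_{ij} \le \log \rho_{\min} + \delta$ for $i \ne j$. If $$\frac{P_{\mathrm{coor}}(x_i, x_i)}{P(x_i)^2} \ge e^{N\delta} \rho_{\min} \quad \text{for all } i = 1,\dots,N,$$ then there exists a constant $C \in \mathbb{R}$ such that the matrix $K + C\,\mathbf{1}\mathbf{1}^\top$ (i.e. $C$ added to every entry of $K$) is positive semi-definite. Consequently there is a map $f : \mathcal{X} \to \mathbb{R}^N$ with $\langle f(x_a), f(x_b)\rangle = K_{\mathrm{PMI}}(x_a, x_b) + C$ for all $x_a, x_b \in \mathcal{X}$.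
   Context: $K_{\mathrm{PMI}}(x_a,x_b) = \log \frac{P_{\mathrm{coor}}(x_a, x_b)}{P(x_a)P(x_b)}$ denotes the pointwise mutual information kernel of the cooccurrence distribution $P_{\mathrm{coor}}$; $\mathbf{1}$ is the all-ones vector in $\mathbb{R}^N$. *)

(* Defs.v *)
From HB Require Import structures.
From mathcomp Require Import all_boot all_order all_algebra.
From mathcomp Require Import reals sequences exp.
Set Implicit Arguments. Unset Strict Implicit. Unset Printing Implicit Defensive.
Import Order.TTheory GRing.Theory Num.Theory.
Local Open Scope ring_scope.

Definition marginal (R : realType) (N : nat) (Pc : 'I_N -> 'I_N -> R) (i : 'I_N) : R :=
  \sum_(j < N) Pc i j.

Definition pmi_matrix (R : realType) (N : nat) (Pc : 'I_N -> 'I_N -> R) : 'M[R]_N :=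
  \matrix_(i < N, j < N) ln (Pc i j / (marginal Pc i * marginal Pc j)).

Definition ones (R : realType) (N : nat) : 'cV[R]_N := const_mx 1.

Definition psd (R : realType) (N : nat) (A : 'M[R]_N) : Prop :=
  forall v : 'cV[R]_N, 0 <= (v^T *m A *m v) 0 0.

Definition dotR (R : realType) (N : nat) (u v : 'rV[R]_N) : R :=
  \sum_(k < N) u 0 k * v 0 k.

(* Main.v *)
Require Import Defs.
From HB Require Import structures.
From mathcomp Require Import all_boot all_order all_algebra.
From mathcomp Require Import reals sequences exp.
From mathcomp Require Import ring lra.
Set Implicit Arguments. Unset Strict Implicit.
Import Order.TTheory GRing.Theory Num.Theory.
Local Open Scope ring_scope.

Section G.

Variable R : realType.

Definition quad n (A : 'I_n -> 'I_n -> R) (v : 'I_n -> R) :=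
  \sum_(i < n) \sum_(j < n) v i * A i j * v j.

Definition ext n (t : R) (w : 'I_n -> R) : 'I_n.+1 -> R :=
  fun i => if unlift ord0 i is Some k then w k else t.

Lemma ext0 n (t : R) (w : 'I_n -> R) : ext t w ord0 = t.
Proof. by rewrite /ext unlift_none. Qed.
Lemma extS n (t : R) (w : 'I_n -> R) k : ext t w (lift ord0 k) = w k.
Proof. by rewrite /ext liftK. Qed.

Lemma quad_ext n (A : 'I_n.+1 -> 'I_n.+1 -> R) (t : R) (w : 'I_n -> R) :
  (forall i j, A i j = A j i) ->
  quad A (ext t w) = t * A ord0 ord0 * t
     + 2 * t * (\sum_(j < n) A ord0 (lift ord0 j) * w j)
     + quad (fun j k => A (lift ord0 j) (lift ord0 k)) w.
Proof.
move=> As; rewrite /quad.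
under eq_bigr => i _ do rewrite big_ord_recl.
rewrite big_ord_recl big_split /= !ext0.
under eq_bigr => i _ do rewrite extS.
under [X in _ + (X + _) = _]eq_bigr => i _ do rewrite extS As.
under [X in _ + (_ + X) = _]eq_bigr => i _ do under eq_bigr => j _ do rewrite !extS.
rewrite mulr_sumr !addrA; congr (_ + _); rewrite -addrA; congr (_ + _).
rewrite -big_split /=; apply: eq_bigr => i _; ring.
Qed.

Lemma sum_delta n (f : 'I_n -> R) j : \sum_(k < n) f k * (k == j)%:R = f j.
Proof.
rewrite (bigD1 j) //= eqxx mulr1 big1 ?addr0 // => k /negbTE ->; by rewrite mulr0.
Qed.

Lemma quad_delta n (A : 'I_n -> 'I_n -> R) j :
  quad A (fun k => (k == j)%:R) = A j j.
Proof.
rewrite /quad; under eq_bigr => i _ do rewrite sum_delta.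
under eq_bigr => i _ do rewrite mulrC.
exact: (sum_delta (fun i => A i j)).
Qed.

Lemma gram n (A : 'I_n -> 'I_n -> R) :
  (forall i j, A i j = A j i) -> (forall v, 0 <= quad A v) ->
  exists F : 'I_n -> 'I_n -> R, forall a b, \sum_(k < n) F a k * F b k = A a b.
Proof.
elim: n A => [|n IH] A As Apsd.
  by exists (fun _ _ => 0) => -[].
set m := A ord0 ord0.
set b := fun j => A ord0 (lift ord0 j).
set A' := fun j k => A (lift ord0 j) (lift ord0 k).
have qe t w : quad A (ext t w) = t * m * t + 2 * t * (\sum_(j < n) b j * w j) + quad A' w.
  exact: quad_ext.
have hm : 0 <= m.
  have := Apsd (ext 1 (fun _ => 0)); rewrite qe.
  rewrite big1 ?mulr0 ?addr0; last by move=> j _; rewrite mulr0.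
  rewrite /quad big1 ?addr0 ?mul1r ?mulr1 //.
  by move=> i _; rewrite big1 // => j _; rewrite !mul0r.
have hb : m = 0 -> forall j, b j = 0.
  move=> m0 j; apply/eqP/negPn/negP => bj.
  set c := A' j j.
  have hc : 0 <= c.
    have := Apsd (ext 0 (fun k => (k == j)%:R)).
    by rewrite qe quad_delta !mulr0 !mul0r !add0r.
  have := Apsd (ext (- (c + 1) / (2 * b j)) (fun k => (k == j)%:R)).
  rewrite qe quad_delta sum_delta m0 mulr0 mul0r add0r.
  have -> : 2 * (- (c + 1) / (2 * b j)) * b j = - (c + 1).
    by field; rewrite bj /=; lra.
  rewrite -/c; lra.
set s := fun w : 'I_n -> R => \sum_(j < n) b j * w j.
set S := fun j k => A' j k - b j * b k / m.
have Ss : forall i j, S i j = S j i.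
  by move=> i j; rewrite /S /A' (As (lift _ i)) [b i * _]mulrC.
have Spsd : forall w, 0 <= quad S w.
  move=> w.
  have -> : quad S w = quad A (ext (- s w / m) w).
    rewrite qe.
    have -> : quad S w = quad A' w - s w * s w / m.
      rewrite /quad /S /s.
      rewrite [X in _ - X](_ : _ = \sum_(i < n) \sum_(j < n) w i * (b i * b j / m) * w j).
        rewrite -sumrB; apply: eq_bigr => i _; rewrite -sumrB; apply: eq_bigr => k _; ring.
      rewrite -mulrA big_distrl /=; apply: eq_bigr => i _.
      rewrite big_distrl /= big_distrr /=; apply: eq_bigr => k _; ring.
    have [m0|m0] := eqVneq m 0.
      have s0 : s w = 0 by rewrite /s big1 // => j _; rewrite hb // mul0r.
      rewrite /s in s0 *; rewrite s0 m0; ring.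
    rewrite /s; field => //.
  exact: Apsd.
have [G HG] := IH S Ss Spsd.
exists (fun a c => if unlift ord0 a is Some j then
   (if unlift ord0 c is Some k then G j k else b j / Num.sqrt m)
   else (if unlift ord0 c is Some k then 0 else Num.sqrt m)).
have sq : Num.sqrt m * Num.sqrt m = m by rewrite -expr2 sqr_sqrtr.
move=> a c; rewrite big_ord_recl /= unlift_none.
under eq_bigr => i _ do rewrite liftK.
case: (unliftP ord0 a) => [j ->|->]; rewrite ?liftK ?unlift_none;
case: (unliftP ord0 c) => [k ->|->]; rewrite ?liftK ?unlift_none.
- rewrite HG /S /A' mulrACA -invfM sq; ring.
- rewrite big1 ?addr0; last by move=> i _; rewrite mulr0.
  rewrite As -/(b j).
  have [m0|m0] := eqVneq m 0; first by rewrite hb // mul0r mul0r.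
  rewrite mulrVK // unitfE sqrtr_eq0 -ltNge lt_def m0 hm //.
- rewrite big1 ?addr0; last by move=> i _; rewrite mul0r.
  rewrite -/(b k).
  have [m0|m0] := eqVneq m 0; first by rewrite hb // mul0r mulr0.
  rewrite mulrC mulrVK // unitfE sqrtr_eq0 -ltNge lt_def m0 hm //.
- by rewrite big1 ?addr0 // => i _; rewrite mul0r.
Qed.

Lemma sum_delta_l n (f : 'I_n -> R) i : \sum_(k < n) (i == k)%:R * f k = f i.
Proof.
rewrite (bigD1 i) //= eqxx mul1r big1 ?addr0 // => k; rewrite eq_sym => /negbTE ->; by rewrite mul0r.
Qed.

Lemma dd_psd n (A : 'I_n -> 'I_n -> R) (d : R) : 0 <= d ->
  (forall i j, i != j -> 0 <= A i j <= d) ->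
  (forall i, n%:R * d <= A i i) -> forall v, 0 <= quad A v.
Proof.
move=> d0 hoff hdiag v.
set g := fun i j : 'I_n => (i == j)%:R * ((n%:R + 1) * d * v i ^+ 2)
   - d / 2 * v i ^+ 2 - d / 2 * v j ^+ 2.
have le : \sum_(i < n) \sum_(j < n) g i j <= quad A v.
  apply: ler_sum => i _; apply: ler_sum => j _; rewrite /g.
  case: (eqVneq i j) => [<-|ij].
    rewrite mul1r; have := hdiag i; nra.
  rewrite mul0r add0r; have /andP[h1 h2] := hoff _ _ ij.
  have e1 : 0 <= A i j * (v i + v j) ^+ 2 by apply: mulr_ge0; rewrite ?sqr_ge0.
  have e2 : 0 <= (d - A i j) * (v i ^+ 2 + v j ^+ 2).
    apply: mulr_ge0; first by rewrite subr_ge0.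
    by apply: addr_ge0; apply: sqr_ge0.
  nra.
set q := \sum_(i < n) v i ^+ 2.
have eqg : \sum_(i < n) \sum_(j < n) g i j = d * q.
  rewrite /g.
  under eq_bigr => i _ do rewrite !sumrB sum_delta_l sumr_const card_ord.
  rewrite !sumrB sumr_const card_ord -!sumrMnl -!mulr_sumr -/q.
  rewrite sumrMnl -mulr_sumr -/q -[d / 2 * q *+ n]mulr_natr; by field.
rewrite eqg in le; apply: le_trans le; apply: mulr_ge0 => //; apply: sumr_ge0 => i _; exact: sqr_ge0.
Qed.
End G.

Theorem mainTheorem1 (R : realType) (N : nat) (Pc : 'I_N -> 'I_N -> R)
  (rho_min delta : R)
  (Pc_pos : forall i j, 0 < Pc i j)
  (Pc_sym : forall i j, Pc i j = Pc j i)
  (Pc_sum1 : \sum_(i < N) \sum_(j < N) Pc i j = 1)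
  (rho_pos : 0 < rho_min)
  (delta_ge0 : 0 <= delta)
  (interval_nonpos : ln rho_min + delta <= 0)
  (offdiag_bounds : forall i j : 'I_N, i != j ->
      ln rho_min <= pmi_matrix Pc i j <= ln rho_min + delta)
  (diag_bound : forall i : 'I_N,
      expR (N%:R * delta) * rho_min <= Pc i i / (marginal Pc i ^+ 2)) :
  exists C : R,
    psd (pmi_matrix Pc + C *: (ones R N *m (ones R N)^T)) /\
    exists f : 'I_N -> 'rV[R]_N,
      forall a b : 'I_N, dotR (f a) (f b) = pmi_matrix Pc a b + C.
Proof.
set C := - ln rho_min.
set A := fun i j => pmi_matrix Pc i j + C.
have As : forall i j, A i j = A j i.
  by move=> i j; rewrite /A !mxE Pc_sym [marginal Pc i * _]mulrC.
have hoff : forall i j, i != j -> 0 <= A i j <= delta.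
  move=> i j /offdiag_bounds /andP[h1 h2]; rewrite /A /C; apply/andP; split; lra.
have hdiag : forall i, N%:R * delta <= A i i.
  move=> i; have := diag_bound i; rewrite expr2 => h.
  have p0 : 0 < expR (N%:R * delta) * rho_min by rewrite mulr_gt0 ?expR_gt0.
  have := h; rewrite -(ler_ln (x := _ * _)) ?posrE //; last exact: lt_le_trans h.
  have L : ln (expR (N%:R * delta) * rho_min) = N%:R * delta + ln rho_min.
    rewrite lnM ?posrE ?expR_gt0 //; first by rewrite expRK.
  rewrite L /A /C mxE => h'; lra.
have Apsd := dd_psd delta_ge0 hoff hdiag.
have [F HF] := gram As Apsd.
exists C; split.
  move=> v.
  have -> : (v^T *m (pmi_matrix Pc + C *: (ones R N *m (ones R N)^T)) *m v) 0 0
      = quad A (fun i => v i 0).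
    rewrite mxE /quad.
    under eq_bigr => j _ do rewrite mxE big_distrl.
    rewrite exchange_big /=; apply: eq_bigr => i _; apply: eq_bigr => j _.
    by rewrite !mxE big_ord1 !mxE /A mulr1 [pmi_matrix _ i j]mxE mulr1.
  exact: Apsd.
exists (fun a => \row_k F a k) => a b.
rewrite /dotR; under eq_bigr => k _ do rewrite !mxE.
exact: HF.
Qed.
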